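(* For every $n\ge 2$, the set of degrees of vertices of ${\rm OFG}(M_{2,n})$ (equivalently, the set of values of the number of flippable faces over all locally valid MV assignments of $M_{2,n}$) is exactly $\{2,3,4,\dots,2n-2,2n\}$.
   Context: The $2\times n$ Miura-ori $M_{2,n}$ ($n\ge1$) has faces $\alpha_{i,j}$ ($i\in\{1,2\}$, $j\in\{1,\dots,n\}$), interior vertices $x_1,\dots,x_{n-1}$, and creases $e_0$ and $e_{3k-1},e_{3k},e_{3k+1}$ ($k=1,\dots,n-1$). At $x_k$ the creases are left $e_{3k-3}$, top $e_{3k-1}$, right $e_{3k}$, bottom $e_{3k+1}$. Face $\alpha_{1,j}$ is bordered by those of $e_{3j-4}$ (iff $j\ge2$), $e_{3j-3}$, $e_{3j-1}$ (iff $j\le n-1$); $\alpha_{2,j}$ by those of $e_{3j-2}$ (iff $j\ge2$), $e_{3j-3}$, $e_{3j+1}$ (iff $j\le n-1$). An MV assignment $\mu$ maps creases to $\{1,-1\}$; it is locally valid if for each $k$ exactly one of $\mu(e_{3k-1}),\mu(e_{3k}),\mu(e_{3k+1})$ differs from $\mu(e_{3k-3})$. The face flip $\mu_\alpha$ negates $\mu$ on the creases bordering $\alpha$; $\alpha$ is flippable under $\mu$ if $\mu,\mu_\alpha$ are both locally valid. ${\rm OFG}(M_{2,n})$ has the locally valid assignments as vertices, with $\mu\sim\mu_\alpha$ for each flippable $\alpha$. *)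

(* Defs.v *)
From mathcomp Require Import all_boot.
Set Implicit Arguments. Unset Strict Implicit. Unset Printing Implicit Defensive.

(* Creases: e_0 and e_{3k-1}, e_{3k}, e_{3k+1} (1 <= k <= n-1), i.e. exactly
   the indices 0 .. 3n-2; we index creases by 'I_(3*n-1) (crease e_c <-> c).
   MV values: true encodes 1 (mountain), false encodes -1 (valley).
   Faces alpha_{i,j} (i in {1,2}, j in {1..n}) are indexed by
   ('I_2 * 'I_n) with (i0, j0) <-> alpha_{i0+1, j0+1}. *)

Definition MVassign (n : nat) := {ffun 'I_(3 * n - 1) -> bool}.
Definition face (n : nat) := ('I_2 * 'I_n)%type.

(* value of mu on crease e_c (c given as a natural number; out-of-range
   indices are never used for 0 <= c <= 3n-2) *)
Definition mv (n : nat) (mu : MVassign n) (c : nat) : bool :=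
  if insub c is Some i then mu i else false.

(* does crease e_c border face alpha_{i,j} (1-based i, j)? *)
Definition borders (n i j c : nat) : bool :=
  if i == 1 then
    [|| (2 <= j) && (c == 3 * j - 4), c == 3 * j - 3 | (j <= n - 1) && (c == 3 * j - 1)]
  else
    [|| (2 <= j) && (c == 3 * j - 2), c == 3 * j - 3 | (j <= n - 1) && (c == 3 * j + 1)].

Definition face_borders (n : nat) (a : face n) (c : nat) : bool :=
  borders n (a.1).+1 (a.2).+1 c.

(* local validity: for each interior vertex x_k, exactly one of the top,
   right, bottom creases has a value different from the left crease *)
Definition locally_valid (n : nat) (mu : MVassign n) : bool :=
  [forall k : 'I_n, (1 <= k) ==>
     (count (fun c => mv mu c != mv mu (3 * k - 3))
        [:: 3 * k - 1; 3 * k; 3 * k + 1] == 1)].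

Definition flip (n : nat) (mu : MVassign n) (a : face n) : MVassign n :=
  [ffun c => if face_borders a (val c) then ~~ mu c else mu c].

Definition flippable (n : nat) (mu : MVassign n) (a : face n) : bool :=
  locally_valid mu && locally_valid (flip mu a).

Definition ofg_adj (n : nat) (mu nu : MVassign n) : bool :=
  [exists a : face n, flippable mu a && (nu == flip mu a)].

Definition ofg_degree (n : nat) (mu : MVassign n) : nat :=
  #|[set nu : MVassign n | locally_valid nu && ofg_adj mu nu]|.

(* Main.v *)
Require Import Defs.
From mathcomp Require Import all_boot.
From mathcomp Require Import zify.
Set Implicit Arguments. Unset Strict Implicit. Unset Printing Implicit Defensive.


Section S.
Variable n : nat.
Implicit Types (mu : MVassign n).

Lemma mv_ffun (G : nat -> bool) c : c < 3 * n - 1 ->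
  mv ([ffun i : 'I_(3 * n - 1) => G (val i)] : MVassign n) c = G c.
Proof.
move=> hc; rewrite /mv; case: insubP => [i _ vi|]; first by rewrite ffunE vi.
by rewrite hc.
Qed.

Lemma mv_flip mu a c : c < 3 * n - 1 ->
  mv (flip mu a) c = (face_borders a c) (+) mv mu c.
Proof.
move=> hc; rewrite /mv; case: insubP => [i _ vi|]; last by rewrite hc.
by rewrite ffunE vi; case: (face_borders a c); case: (mu i).
Qed.

Lemma fbL (i : 'I_2) j k : 0 < k < n ->
  borders n i.+1 j.+1 (3 * k - 3) = (k == j.+1).
Proof. case: i => [[|[|i]] hi] //= hk; rewrite /borders /=; apply/idP/idP; lia. Qed.
Lemma fbT (i : 'I_2) j k : 0 < k < n ->
  borders n i.+1 j.+1 (3 * k - 1) = (val i == 0) && ((k == j) || (k == j.+1)).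
Proof. case: i => [[|[|i]] hi] //= hk; rewrite /borders /=; apply/idP/idP; lia. Qed.
Lemma fbR (i : 'I_2) j k : 0 < k < n ->
  borders n i.+1 j.+1 (3 * k) = (k == j).
Proof. case: i => [[|[|i]] hi] //= hk; rewrite /borders /=; apply/idP/idP; lia. Qed.
Lemma fbB (i : 'I_2) j k : 0 < k < n ->
  borders n i.+1 j.+1 (3 * k + 1) = (val i == 1) && ((k == j) || (k == j.+1)).
Proof. case: i => [[|[|i]] hi] //= hk; rewrite /borders /=; apply/idP/idP; lia. Qed.

Definition Vk mu k := count (fun c => mv mu c != mv mu (3 * k - 3))
  [:: 3 * k - 1; 3 * k; 3 * k + 1] == 1.
Definition vT mu k := (0 < k < n) && (mv mu (3 * k - 1) != mv mu (3 * k - 3)).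
Definition vB mu k := (0 < k < n) && (mv mu (3 * k + 1) != mv mu (3 * k - 3)).

Lemma Vk_flip mu (i : 'I_2) (j : 'I_n) k : 0 < k < n -> Vk mu k ->
  Vk (flip mu (i, j)) k =
  (if k == j then (if val i == 0 then ~~ vB mu k else ~~ vT mu k) else true) &&
  (if k == j.+1 then (if val i == 0 then ~~ vT mu k else ~~ vB mu k) else true).
Proof.
move=> hk; rewrite /Vk /= !mv_flip; try lia.
rewrite /face_borders /= fbL // fbT // fbR // fbB // /vT /vB hk /=.
case E1: (k == j); case E2: (k == j.+1) => //=; first by move/eqP: E1; move/eqP: E2; lia.
- case: i => [[|[|i]] hi] //=;
  case: (mv mu (3 * k - 3)); case: (mv mu (3 * k - 1)); case: (mv mu (3 * k)); by case: (mv mu (3 * k + 1)).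
- case: i => [[|[|i]] hi] //=;
  case: (mv mu (3 * k - 3)); case: (mv mu (3 * k - 1)); case: (mv mu (3 * k)); by case: (mv mu (3 * k + 1)).
- case: i => [[|[|i]] hi] //=;
  case: (mv mu (3 * k - 3)); case: (mv mu (3 * k - 1)); case: (mv mu (3 * k)); by case: (mv mu (3 * k + 1)).
Qed.

Lemma Vk_of mu k : locally_valid mu -> 0 < k < n -> Vk mu k.
Proof.
move=> /forallP V /andP[k0 kn]; have := V (Ordinal kn); by rewrite /= k0.
Qed.

Lemma flip_valid mu (i : 'I_2) (j : 'I_n) : locally_valid mu ->
  locally_valid (flip mu (i, j)) =
  (if val i == 0 then ~~ vB mu j && ~~ vT mu j.+1 else ~~ vT mu j && ~~ vB mu j.+1).
Proof.
move=> V; apply/forallP/idP.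
- move=> W.
  have key k : 0 < k < n -> Vk (flip mu (i, j)) k.
    by case/andP=> k0 kn; have := W (Ordinal kn); rewrite /= k0.
  have h1 : (if val i == 0 then ~~ vB mu j else ~~ vT mu j).
    case: (posnP j) => [j0|jp].
      by rewrite /vB /vT j0; case: (val i == 0).
    have hk : 0 < j < n by rewrite jp ltn_ord.
    by have := key _ hk; rewrite Vk_flip ?Vk_of // eqxx => /andP[].
  have h2 : (if val i == 0 then ~~ vT mu j.+1 else ~~ vB mu j.+1).
    case: (ltnP j.+1 n) => [jn|jn].
      have hk : 0 < j.+1 < n by rewrite jn.
      by have := key _ hk; rewrite Vk_flip ?Vk_of // eqxx => /andP[].
    have e : (j.+1 < n) = false by rewrite ltnNge jn.
    by rewrite /vB /vT e andbF; case: (val i == 0).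
  by move: h1 h2; case: (val i == 0) => -> ->.
- move=> C k; apply/implyP => k0.
  have hk : 0 < k < n by rewrite k0 ltn_ord.
  change (Vk (flip mu (i, j)) k); rewrite Vk_flip ?Vk_of //.
  case E1: (nat_of_ord k == nat_of_ord j); case E2: (nat_of_ord k == j.+1) => //=;
    first by move: E2; rewrite (eqP E1) => /eqP; lia.
  all: move: C; rewrite ?(eqP E1) ?(eqP E2); case: (val i == 0) => /andP[h1 h2]; rewrite ?h1 ?h2 ?andbT //.
Qed.

Lemma fb_inj (hn : 1 < n) (a b : face n) :
  (forall c, c < 3 * n - 1 -> face_borders a c = face_borders b c) -> a = b.
Proof.
case: a => [[i hi] [j hj]]; case: b => [[i' hi'] [j' hj']] H.
have h0 : face_borders (Ordinal hi', Ordinal hj') (3 * j).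
  rewrite -H; last by lia.
  by rewrite /face_borders /borders /=; case: ifP => _; lia.
have h1 := H (3 * j + 2); have h2 := H (3 * j - 1); clear H.
move: h0 h1 h2; rewrite /face_borders /borders /=.
case: i hi => [|[|i]] hi //=; case: i' hi' => [|[|i']] hi' //= h0.
all: have ej : j = j' by lia.
all: subst j'; clear h0; move=> h1 h2.
- by rewrite (bool_irrelevance hi hi') (bool_irrelevance hj hj').
- exfalso; case: (ltnP j (n - 1)) => hjn.
  + have hh : 3 * j + 2 < 3 * n - 1 by clear h1 h2; lia.
    by have := h1 hh; clear h1 h2; lia.
  + have hh : 3 * j - 1 < 3 * n - 1 by clear h1 h2; lia.
    by have := h2 hh; clear h1 h2; lia.
- exfalso; case: (ltnP j (n - 1)) => hjn.
  + have hh : 3 * j + 2 < 3 * n - 1 by clear h1 h2; lia.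
    by have := h1 hh; clear h1 h2; lia.
  + have hh : 3 * j - 1 < 3 * n - 1 by clear h1 h2; lia.
    by have := h2 hh; clear h1 h2; lia.
- by rewrite (bool_irrelevance hi hi') (bool_irrelevance hj hj').
Qed.

Lemma flip_inj mu (hn : 1 < n) : injective (flip mu).
Proof.
move=> a b e; apply: fb_inj => // c hc.
have := congr1 (fun f : MVassign n => f (Ordinal hc)) e; rewrite !ffunE /=.
by case: (face_borders a c); case: (face_borders b c); case: (mu _).
Qed.

Definition fterm (T B : nat -> bool) j : nat :=
  (~~ B j && ~~ T j.+1) + (~~ T j && ~~ B j.+1).

Lemma degree_sum mu (hn : 1 < n) : locally_valid mu ->
  ofg_degree mu = \sum_(j < n) fterm (vT mu) (vB mu) j.
Proof.
move=> V; rewrite /ofg_degree.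
have -> : [set nu | locally_valid nu && ofg_adj mu nu] =
          [set flip mu a | a in [set a | flippable mu a]].
  apply/setP => nu; rewrite !inE; apply/andP/imsetP.
  - by case=> _ /existsP[a /andP[fa /eqP ->]]; exists a => //; rewrite inE.
  - case=> a; rewrite inE => fa ->; split; first by case/andP: fa.
    by apply/existsP; exists a; rewrite fa eqxx.
rewrite card_imset; last exact: flip_inj.
rewrite -sum1_card big_mkcond /=.
rewrite (eq_bigr (fun p : face n => nat_of_bool (flippable mu (p.1, p.2)))); last first.
  by case=> i j _; rewrite inE /=; case: (flippable _ _).
rewrite -(pair_big xpredT xpredT (fun i j => nat_of_bool (flippable mu (i, j)))) /=.
rewrite big_ord_recl big_ord1 -big_split /=; apply: eq_bigr => j _.
by rewrite /flippable V !flip_valid //= /fterm addnC.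
Qed.

End S.



Lemma fle1 (T B : nat -> bool) j : T j.+1 || B j.+1 -> fterm T B j <= 1.
Proof. by rewrite /fterm; case: (T j.+1); case: (B j.+1); case: (T j); case: (B j). Qed.
Lemma fle1' (T B : nat -> bool) j : T j || B j -> fterm T B j <= 1.
Proof. by rewrite /fterm; case: (T j.+1); case: (B j.+1); case: (T j); case: (B j). Qed.
Lemma fle2 (T B : nat -> bool) j : fterm T B j <= 2.
Proof. by rewrite /fterm; case: (T j.+1); case: (B j.+1); case: (T j); case: (B j). Qed.

Lemma sum_bounds n (hn : 1 < n) (T B : nat -> bool) :
  T 0 = false -> B 0 = false -> T n = false -> B n = false ->
  (forall k, ~~ (T k && B k)) ->
  2 <= \sum_(j < n) fterm T B j /\
  (\sum_(j < n) fterm T B j = 2 * n \/ \sum_(j < n) fterm T B j <= 2 * n - 2).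
Proof.
move=> T0 B0 Tn Bn ex.
have tot : \sum_(j < n) fterm T B j + \sum_(j < n) (2 - fterm T B j) = 2 * n.
  rewrite -big_split /= (eq_bigr (fun _ => 2)); last by move=> j _; rewrite subnKC // fle2.
  by rewrite sum_nat_const card_ord mulnC.
split.
  have l0 : 1 <= fterm T B 0.
    by rewrite /fterm T0 B0 /=; move: (ex 1); case: (T 1); case: (B 1).
  have ln : 1 <= fterm T B n.-1.
    rewrite /fterm (prednK (ltnW hn)) Tn Bn !andbT; move: (ex n.-1); by case: (T _); case: (B _).
  move: l0 ln; case: n hn {tot T0 B0 Tn Bn} => [|[|m]] // _ l0 ln.
  rewrite big_ord_recl big_ord_recr /=; move: ln => /=.
  have -> : bump 0 m = m.+1 by [].
  move: (fterm T B 0) (fterm T B m.+1) (\sum_(i < m) _) l0 => a b c.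
  lia.
case: (boolP [exists k : 'I_n, (0 < k) && (T k || B k)]).
- case/existsP => v /andP[v0 hv]; right.
  have hv1 : v.-1 < n by apply: leq_ltn_trans (leq_pred _) (ltn_ord v).
  have d2 : 2 <= \sum_(j < n) (2 - fterm T B j).
    rewrite (bigD1 (Ordinal hv1)) //= (bigD1 v) /=; last first.
      by apply/eqP => /(congr1 val) /=; lia.
    have a1 : fterm T B v.-1 <= 1 by apply: fle1; rewrite prednK.
    have a2 : fterm T B v <= 1 by apply: fle1'.
    move: a1 a2 (\sum_(i < n | _) _); move: (fterm T B v.-1) (fterm T B v) => p q z.
    lia.
  move: (\sum_(j < n) (2 - fterm T B j)) (\sum_(j < n) fterm T B j) tot d2 hn => x y.
  lia.
- rewrite negb_exists => /forallP H; left.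
  suff z : \sum_(j < n) (2 - fterm T B j) = 0 by rewrite z addn0 in tot.
  apply: big1 => j _.
  have Hk k : k <= n -> (T k = false) /\ (B k = false).
    case: (posnP k) => [->|k0]; first by [].
    rewrite leq_eqVlt; case/orP => [/eqP->|kn]; first by [].
    by have := H (Ordinal kn); rewrite /= k0 /= negb_or => /andP[/negbTE -> /negbTE ->].
  rewrite /fterm; have [-> ->] := Hk j (ltnW (ltn_ord j)).
  by have [-> ->] := Hk j.+1 (ltn_ord j).
Qed.


Section C.
Variables (n : nat) (T B : nat -> bool).

Fixpoint hh k := if k is k'.+1 then hh k' (+) (~~ T k && ~~ B k) else false.
Definition G c := let q := c %/ 3 in let r := c %% 3 in
  if r == 0 then hh q else if r == 1 then hh q.-1 (+) B q else hh q (+) T q.+1.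
Definition mk : MVassign n := [ffun i : 'I_(3 * n - 1) => G (val i)].

Lemma hh_S k : 0 < k -> hh k = hh k.-1 (+) (~~ T k && ~~ B k).
Proof. by case: k. Qed.

Lemma mk_vals k : 0 < k < n ->
  [/\ mv mk (3 * k - 3) = hh k.-1, mv mk (3 * k - 1) = hh k.-1 (+) T k,
      mv mk (3 * k) = hh k.-1 (+) (~~ T k && ~~ B k) &
      mv mk (3 * k + 1) = hh k.-1 (+) B k].
Proof.
move=> hk; rewrite /mk !mv_ffun; try lia.
have e1 : 3 * k - 3 = k.-1 * 3 + 0 by lia.
have e2 : 3 * k - 1 = k.-1 * 3 + 2 by lia.
have e3 : 3 * k = k * 3 + 0 by lia.
have e4 : 3 * k + 1 = k * 3 + 1 by lia.
rewrite /G e1 e2 e4 e3 !divnMDl // !modnMDl /=.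
have d0 : 0 %/ 3 = 0 by []. have d1 : 1 %/ 3 = 0 by []. have d2 : 2 %/ 3 = 0 by [].
rewrite d0 d1 d2 !addn0 prednK; last by case/andP: hk.
by split => //; rewrite hh_S //; case/andP: hk.
Qed.

Lemma construct :
  (forall k, T k -> 0 < k < n) -> (forall k, B k -> 0 < k < n) ->
  (forall k, ~~ (T k && B k)) ->
  [/\ locally_valid mk, (forall k, vT mk k = T k) & (forall k, vB mk k = B k)].
Proof.
move=> sT sB ex; split.
- apply/forallP => k; apply/implyP => k0.
  have hk : 0 < k < n by rewrite k0 ltn_ord.
  rewrite /=; have [-> -> -> ->] := mk_vals hk.
  by move: (ex k); case: (T k); case: (B k); case: (hh _).
- move=> k; rewrite /vT; case hk: (0 < k < n) => /=.
    have [-> -> _ _] := mk_vals hk.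
    by case: (T k); case: (hh _).
  by case e: (T k) => //; move: (sT k); rewrite e hk => /(_ isT).
- move=> k; rewrite /vB; case hk: (0 < k < n) => /=.
    have [-> _ _ ->] := mk_vals hk.
    by case: (B k); case: (hh _).
  by case e: (B k) => //; move: (sB k); rewrite e hk => /(_ isT).
Qed.
End C.


Lemma cst a b c (F : nat -> nat) : (forall i, a <= i < b -> F i = c) ->
  \sum_(a <= i < b) F i = (b - a) * c.
Proof. by move=> H; rewrite (eq_big_nat _ _ H) sum_nat_const_nat. Qed.

Lemma sum_even n m : 1 < n -> m <= n - 2 ->
  \sum_(j < n) fterm (fun k => m < k < n) (fun _ => false) j = 2 * m + 2.
Proof.
move=> hn hm; rewrite -(big_mkord xpredT).
rewrite (big_cat_nat (leq0n m) (_ : m <= n)) /=; last lia.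
rewrite [\sum_(m <= i < n) _]big_ltn; last lia.
rewrite (big_cat_nat (_ : m.+1 <= n.-1) (_ : n.-1 <= n)); try lia.
rewrite [\sum_(n.-1 <= i < n) _]big_ltn; last lia.
rewrite [\sum_(n.-1.+1 <= i < n) _]big_geq; last lia.
rewrite (cst (c := 2)); last by move=> i hi; rewrite /fterm; lia.
rewrite (cst (a := m.+1) (c := 0)); last by move=> i hi; rewrite /fterm; lia.
have e1 : fterm (fun k => m < k < n) (fun _ => false) m = 1 by rewrite /fterm; lia.
have e2 : fterm (fun k => m < k < n) (fun _ => false) n.-1 = 1 by rewrite /fterm; lia.
rewrite e1 e2 /=.
lia.
Qed.

Lemma sum_odd n m : m + 3 <= n ->
  \sum_(j < n) fterm (fun k => k == m.+1) (fun k => m.+1 < k < n) j = 2 * m + 3.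
Proof.
move=> hm; rewrite -(big_mkord xpredT).
rewrite (big_cat_nat (leq0n m) (_ : m <= n)) /=; last lia.
rewrite [\sum_(m <= i < n) _]big_ltn; last lia.
rewrite [\sum_(m.+1 <= i < n) _]big_ltn; last lia.
rewrite (big_cat_nat (_ : m.+2 <= n.-1) (_ : n.-1 <= n)); try lia.
rewrite [\sum_(n.-1 <= i < n) _]big_ltn; last lia.
rewrite [\sum_(n.-1.+1 <= i < n) _]big_geq; last lia.
rewrite (cst (c := 2)); last by move=> i hi; rewrite /fterm; lia.
rewrite (cst (a := m.+2) (c := 0)); last by move=> i hi; rewrite /fterm; lia.
have e1 : fterm (fun k => k == m.+1) (fun k => m.+1 < k < n) m = 1 by rewrite /fterm; lia.
have e2 : fterm (fun k => k == m.+1) (fun k => m.+1 < k < n) m.+1 = 1 by rewrite /fterm; lia.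
have e3 : fterm (fun k => k == m.+1) (fun k => m.+1 < k < n) n.-1 = 1 by rewrite /fterm; lia.
rewrite e1 e2 e3 /=; lia.
Qed.

Lemma sum_all n :
  \sum_(j < n) fterm (fun _ => false) (fun _ => false) j = 2 * n.
Proof. by rewrite (eq_bigr (fun _ => 2)) // sum_nat_const card_ord mulnC. Qed.


Lemma realize n (hn : 1 < n) (T B : nat -> bool) :
  (forall k, T k -> 0 < k < n) -> (forall k, B k -> 0 < k < n) ->
  (forall k, ~~ (T k && B k)) ->
  exists mu : MVassign n, locally_valid mu /\ ofg_degree mu = \sum_(j < n) fterm T B j.
Proof.
move=> sT sB ex; have [V eT eB] := construct (n := n) sT sB ex.
exists (mk n T B); split => //; rewrite degree_sum //.
by apply: eq_bigr => j _; rewrite /fterm !eT !eB.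
Qed.

Theorem theorem4p9 (n : nat) (hn : 2 <= n) (d : nat) :
  (exists mu : MVassign n, locally_valid mu /\ ofg_degree mu = d) <->
  ((2 <= d <= 2 * n - 2) \/ d = 2 * n).
Proof.
split.
- case=> mu [V <-]; rewrite degree_sum //.
  have ex k : ~~ (vT mu k && vB mu k).
    rewrite /vT /vB; case hk: (0 < k < n) => //=.
    have := Vk_of V hk; rewrite /Vk /=.
    by case: (mv mu (3*k-3)); case: (mv mu (3*k-1)); case: (mv mu (3*k)); case: (mv mu (3*k+1)).
  have T0 : vT mu 0 = false by [].
  have B0 : vB mu 0 = false by [].
  have Tn : vT mu n = false by rewrite /vT ltnn andbF.
  have Bn : vB mu n = false by rewrite /vB ltnn andbF.
  have [lo [e|le]] := sum_bounds hn T0 B0 Tn Bn ex.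
  + by right.
  + by left; rewrite lo le.
- case=> [/andP[lo hi] | ->]; last first.
    have := @realize n hn (fun _ => false) (fun _ => false).
    by rewrite sum_all; apply.
  have h := odd_double_half d; rewrite -muln2 in h.
  move: h; move: (d./2) => q.
  case: (boolP (odd d)) => od h.
  + pose m := q - 1.
    have hm : m + 3 <= n by rewrite /m; lia.
    have -> : d = 2 * m + 3 by rewrite /m; lia.
    rewrite -(sum_odd hm); apply: realize => //.
    * by move=> k /eqP ->; lia.
    * by move=> k hk; lia.
    * by move=> k; apply/negP => /andP[/eqP -> ]; lia.
  + pose m := q - 1.
    have hm : m <= n - 2 by rewrite /m; lia.
    have -> : d = 2 * m + 2 by rewrite /m; lia.
    rewrite -(sum_even hn hm); apply: realize => //.
    * by move=> k hk; lia.
    * by move=> k; rewrite andbF.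
Qed.
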